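(* Let $A_1,\dots,A_d\in\mathbb{R}^{d\times d}$ be symmetric and define $H^m:\mathbb{R}^d\to\mathbb{R}^d$ and $H^v:\mathbb{R}^d\to\mathbb{R}^{d^2}$ by $$H^m_k(z)=z^{\intercal}A_kz,\qquad H^v_{kl}(z)=(z^{\intercal}A_kz)z_l+z_k(z^{\intercal}A_lz),\quad 1\le k,l\le d.$$ Let $\tilde\rho$ be a probability density on $\mathbb{R}^d$ with all moments finite, $\tilde{\mathbb{E}}$ the expectation with respect to $\tilde\rho$, $\bar H^m=\tilde{\mathbb{E}}[H^m(\tilde Z)]$, $\bar H^v=\tilde{\mathbb{E}}[H^v(\tilde Z)]$, and let $\Gamma_m,\Gamma_v$ be symmetric positive definite matrices of sizes $d\times d$ and $d^2\times d^2$. Define $K^m=\tilde K^m\Gamma_m^{-2}$ and $K^v=\tilde K^v\Gamma_v^{-2}$ with $\tilde K^m(z)\in\mathbb{R}^{d\times d}$, $\tilde K^v(z)\in\mathbb{R}^{d\times d^2}$ given by $$\tilde K^m_{j,k}(z)=\tfrac12 z_j\big[(z^{\intercal}A_kz)-\bar H^m_k\big],\qquad \tilde K^v_{j,kl}(z)=\tfrac13z_j(z^{\intercal}A_kz)z_l+\tfrac13z_j(z^{\intercal}A_lz)z_k-\tfrac13z_j\bar H^v_{kl}.$$ Then for $(K,H,\Gamma)=(K^m,H^m,\Gamma_m)$ and $(K,H,\Gamma)=(K^v,H^v,\Gamma_v)$, $$\tilde{\mathbb{E}}\big[K(\tilde Z)^{\intercal}\nabla H(\tilde Z)\big]=\Gamma^{-2}C^H,\qquad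 C^H=\tilde{\mathbb{E}}\big[(H(\tilde Z)-\bar H)(H(\tilde Z)-\bar H)^{\intercal}\big].$$
   Context: $\tilde Z$ is a random vector with density $\tilde\rho$. For a vector-valued $H$, $\nabla H$ is the matrix $(\nabla H)_{jl}=\partial_{z_j}H_l$, so $(K^{\intercal}\nabla H)_{kl}=\sum_jK_{jk}\partial_{z_j}H_l$. Indices of $H^v$ and of the columns of $\tilde K^v$ run over pairs $(k,l)$, $1\le k,l\le d$. *)

(* Defs.v *)
From HB Require Import structures.
From mathcomp Require Import all_boot all_order all_algebra.
From mathcomp Require Import all_classical all_reals all_analysis.
Set Implicit Arguments. Unset Strict Implicit. Unset Printing Implicit Defensive.
Import Order.TTheory GRing.Theory Num.Theory.
Import numFieldNormedType.Exports.
Local Open Scope classical_set_scope.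
Local Open Scope ring_scope.

Section defs.
Variable R : realType.

(* Points of R^d are represented as row vectors 'rV[R]_d for the analytic
   part (derivatives) and as d-tuples (product sigma-algebra) for the
   measure-theoretic part; [tup2rv] is the canonical identification. *)
Definition tup2rv (d : nat) (z : d.-tuple R) : 'rV[R]_d := \row_j tnth z j.

(* For nonnegative measurable f this is
   the integral against d-dimensional Lebesgue measure (Tonelli). *)
Fixpoint lebesgue_iint (d : nat) : (d.-tuple R -> \bar R) -> \bar R :=
  match d return (d.-tuple R -> \bar R) -> \bar R with
  | 0 => fun f => f [tuple]
  | n.+1 => fun f =>
      (\int[@lebesgue_measure R]_x lebesgue_iint (fun t : n.-tuple R => f [tuple of x :: t]))%E
  end.

Definition is_density (d : nat) (P : probability (d.-tuple R) R)
    (rho : d.-tuple R -> R) : Prop :=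
  [/\ forall z, 0 <= rho z,
      measurable_fun setT rho &
      forall S : set (d.-tuple R), measurable S ->
        P S = lebesgue_iint (fun z => ((\1_S z : R) * rho z)%:E)].

Definition all_moments_finite (d : nat) (P : probability (d.-tuple R) R) : Prop :=
  forall (j : 'I_d) (k : nat), P.-integrable setT (fun z => ((tnth z j) ^+ k)%:E).

Definition Ex (d : nat) (P : probability (d.-tuple R) R) (f : 'rV[R]_d -> R) : R :=
  Rintegral P setT (fun z => f (tup2rv z)).

Definition Emx (d m n : nat) (P : probability (d.-tuple R) R)
    (F : 'rV[R]_d -> 'M[R]_(m, n)) : 'M[R]_(m, n) :=
  \matrix_(i, j) Ex P (fun z => F z i j).

Definition spd (n : nat) (G : 'M[R]_n) : Prop :=
  G^T = G /\ forall x : 'rV[R]_n, x != 0 -> 0 < (x *m G *m x^T) 0 0.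

Definition quad (d : nat) (A : 'M[R]_d) (z : 'rV[R]_d) : R := (z *m A *m z^T) 0 0.

Definition grad (d n : nat) (H : 'rV[R]_d -> 'cV[R]_n) (z : 'rV[R]_d) : 'M[R]_(d, n) :=
  \matrix_(j, l) 'D_(delta_mx 0 j) (fun x => H x l 0) z.

Definition covH (d n : nat) (P : probability (d.-tuple R) R)
    (H : 'rV[R]_d -> 'cV[R]_n) : 'M[R]_n :=
  let Hbar := Emx P H in
  Emx P (fun z => (H z - Hbar) *m (H z - Hbar)^T).

Definition Hm (d : nat) (A : 'I_d -> 'M[R]_d) (z : 'rV[R]_d) : 'cV[R]_d :=
  \col_k quad (A k) z.

(* H^v_{kl}(z) = (z^T A_k z) z_l + z_k (z^T A_l z); the pair (k,l) is
   flattened to the index mxvec_index k l of 'I_(d * d). *)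
Definition Hv (d : nat) (A : 'I_d -> 'M[R]_d) (z : 'rV[R]_d) : 'cV[R]_(d * d) :=
  (mxvec (\matrix_(k, l) (quad (A k) z * z 0 l + z 0 k * quad (A l) z)))^T.

Definition Ktm (d : nat) (P : probability (d.-tuple R) R) (A : 'I_d -> 'M[R]_d)
    (z : 'rV[R]_d) : 'M[R]_d :=
  let Hbar := Emx P (Hm A) in
  \matrix_(j, k) (2^-1 * z 0 j * (quad (A k) z - Hbar k 0)).

Definition Ktv (d : nat) (P : probability (d.-tuple R) R) (A : 'I_d -> 'M[R]_d)
    (z : 'rV[R]_d) : 'M[R]_(d, d * d) :=
  let Hbar := Emx P (Hv A) in
  \matrix_j (mxvec (\matrix_(k, l)
     (3^-1 * z 0 j * quad (A k) z * z 0 l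
    + 3^-1 * z 0 j * quad (A l) z * z 0 k
    - 3^-1 * z 0 j * Hbar (mxvec_index k l) 0))).
End defs.

(* Main.v *)
Require Import Defs.
From HB Require Import structures.
From mathcomp Require Import all_boot all_order all_algebra.
From mathcomp Require Import all_classical all_reals all_analysis.
From mathcomp Require Import ring lra measurable_realfun.
Import Order.TTheory GRing.Theory Num.Theory.
Import numFieldNormedType.Exports.
Local Open Scope classical_set_scope.
Local Open Scope ring_scope.
Set Implicit Arguments. Unset Strict Implicit.


Section Int.
Variable R : realType.
Variable d : nat.
Variable P : probability (d.-tuple R) R.
Hypothesis hmom : all_moments_finite P.

Definition mnrm (t : d.-tuple R) : R := \big[Num.max/0]_(j < d) `|tnth t j|.

Lemma mnrm_ge0 t : 0 <= mnrm t.
Proof. exact: bigmax_ge_id. Qed.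

Lemma le_mnrm t j : `|tnth t j| <= mnrm t.
Proof. exact: le_bigmax. Qed.

Definition good (f : d.-tuple R -> R) := measurable_fun setT f /\
  exists C : R, exists N : nat, 0 <= C /\ forall t, `|f t| <= C * (1 + mnrm t) ^+ N.

Lemma good_ext f g : good f -> (forall t, f t = g t) -> good g.
Proof.
move=> [mf [C [N [C0 hC]]]] fg; split.
  by apply: eq_measurable_fun mf => t _; rewrite fg.
by exists C, N; split => // t; rewrite -fg.
Qed.
Lemma good_ext_old f g : (forall t, f t = g t) -> good f -> good g.
Proof.
move=> fg [mf [C [N [C0 hC]]]]; split.
  by apply: eq_measurable_fun mf => t _; rewrite fg.
by exists C, N; split => // t; rewrite -fg.
Qed.

Lemma good_cst a : good (fun _ => a).
Proof.
split; first exact: measurable_cst.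
by exists `|a|, 0%N; split => // t; rewrite expr0 mulr1.
Qed.

Lemma meas_coord j : measurable_fun setT (fun t : d.-tuple R => tnth t j).
Proof.
have /integrableP[m _] := hmom j 1.
move/measurable_EFinP : m.
by apply: eq_measurable_fun => t _; rewrite expr1.
Qed.

Lemma good_coord j : good (fun t => tnth t j).
Proof.
split; first exact: meas_coord.
exists 1, 1%N; split => // t; rewrite expr1 mul1r.
have := le_mnrm t j; lra.
Qed.

Lemma good_add f g : good f -> good g -> good (fun t => f t + g t).
Proof.
move=> [mf [C1 [N1 [C10 h1]]]] [mg [C2 [N2 [C20 h2]]]]; split.
  exact: measurable_funD.
exists (C1 + C2), (N1 + N2)%N; split; first lra.
move=> t; have m0 := mnrm_ge0 t.
have e1 : 1 <= 1 + mnrm t by lra.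
have p1 : (1 + mnrm t) ^+ N1 <= (1 + mnrm t) ^+ (N1 + N2) by apply: ler_weXn2l => //; rewrite leq_addr.
have p2 : (1 + mnrm t) ^+ N2 <= (1 + mnrm t) ^+ (N1 + N2) by apply: ler_weXn2l => //; rewrite leq_addl.
have q1 := h1 t; have q2 := h2 t.
have r1 : C1 * (1 + mnrm t) ^+ N1 <= C1 * (1 + mnrm t) ^+ (N1 + N2) by apply: ler_wpM2l.
have r2 : C2 * (1 + mnrm t) ^+ N2 <= C2 * (1 + mnrm t) ^+ (N1 + N2) by apply: ler_wpM2l.
have := ler_normD (f t) (g t).
rewrite mulrDl; lra.
Qed.

Lemma good_mul f g : good f -> good g -> good (fun t => f t * g t).
Proof.
move=> [mf [C1 [N1 [C10 h1]]]] [mg [C2 [N2 [C20 h2]]]]; split.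
  exact: measurable_funM.
exists (C1 * C2), (N1 + N2)%N; split; first exact: mulr_ge0.
move=> t; rewrite normrM exprD mulrACA.
by apply: ler_pM => //; apply: normr_ge0.
Qed.

Lemma good_sum_seq (I : Type) (s : seq I) (F : I -> d.-tuple R -> R) :
  (forall i, good (F i)) -> good (fun t => \sum_(i <- s) F i t).
Proof.
move=> hF; elim: s => [|i s IH].
  by apply: (@good_ext (fun _ => 0)); [exact: good_cst | move=> t; rewrite big_nil].
by apply: (@good_ext (fun t => F i t + \sum_(j <- s) F j t)); [exact: good_add | move=> t; rewrite big_cons].
Qed.

Lemma good_sum (I : finType) (F : I -> d.-tuple R -> R) :
  (forall i, good (F i)) -> good (fun t => \sum_i F i t).
Proof. exact: good_sum_seq. Qed.

Lemma eqint (f g : d.-tuple R -> \bar R) : P.-integrable setT f ->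
  (forall t, f t = g t) -> P.-integrable setT g.
Proof. by move=> hf fg; apply: (eq_integrable _ f) => // t _; rewrite fg. Qed.

Lemma intD f g : P.-integrable setT (EFin \o f) -> P.-integrable setT (EFin \o g) ->
  P.-integrable setT (EFin \o (fun t => f t + g t)).
Proof. by move=> hf hg; apply: eqint (integrableD _ hf hg) _. Qed.

Lemma intC (a : R) : P.-integrable setT (EFin \o (fun _ : d.-tuple R => a)).
Proof. exact: (finite_measure_integrable_cst P a). Qed.

Lemma good_integrable f : good f -> P.-integrable setT (EFin \o f).
Proof.
move=> [mf [C [N [C0 hC]]]].
pose g (t : d.-tuple R) := C * 2 ^+ N * (1 + \sum_(j < d) `|tnth t j| ^+ N).
have i1 : P.-integrable setT (EFin \o (fun t : d.-tuple R => 1 + \sum_(j < d) `|tnth t j| ^+ N)).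
  apply: intD; first exact: intC.
  elim: (index_enum 'I_d) => [|j s IH].
    by apply: eqint (intC 0) _ => t /=; rewrite big_nil.
  apply: eqint (intD _ IH) _; last by move=> t /=; rewrite big_cons.
  have := integrable_norm (hmom j N).
  by move/eqint; apply => t /=; rewrite normrX.
have ig : P.-integrable setT (EFin \o g).
  by apply: eqint (integrableZl _ (C * 2 ^+ N) i1) _ => // t /=; rewrite EFinM.
apply: le_integrable ig => //.
  exact/measurable_EFinP.
move=> t _ /=.
have s0 : 0 <= \sum_(j < d) `|tnth t j| ^+ N by apply: sumr_ge0 => j _; exact: exprn_ge0.
have g0 : 0 <= g t by rewrite /g; apply: mulr_ge0; [apply: mulr_ge0 => //; exact: exprn_ge0|lra].
rewrite lee_fin (ger0_norm g0) (le_trans (hC t))//.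
have m0 := mnrm_ge0 t.
have hM : mnrm t ^+ N <= 1 + \sum_(j < d) `|tnth t j| ^+ N.
  rewrite /mnrm; apply: (big_ind (fun x => x ^+ N <= 1 + \sum_(j < d) `|tnth t j| ^+ N)).
  - by rewrite expr0n; case: (_ == _); rewrite ?mulr1n ?mulr0n; lra.
  - by move=> x y hx hy; rewrite /Order.max; case: ifP.
  - move=> j _; rewrite (bigD1 j) //=.
    have : 0 <= \sum_(i < d | i != j) `|tnth t i| ^+ N by apply: sumr_ge0 => i _; exact: exprn_ge0.
    lra.
rewrite /g -mulrA ler_wpM2l //.
case: (leP (mnrm t) 1) => hm.
  have : (1 + mnrm t) ^+ N <= 2 ^+ N by apply: lerXn2r; rewrite ?nnegrE; lra.
  have : 0 <= mnrm t ^+ N by exact: exprn_ge0.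
  have : 0 <= 2 ^+ N :> R by exact: exprn_ge0.
  nra.
have : (1 + mnrm t) ^+ N <= (2 * mnrm t) ^+ N by apply: lerXn2r; rewrite ?nnegrE; lra.
rewrite exprMn.
have : 0 <= 2 ^+ N :> R by exact: exprn_ge0.
nra.
Qed.
End Int.


Section Ex.
Variable R : realType.
Variable d : nat.
Variable P : probability (d.-tuple R) R.
Hypothesis hmom : all_moments_finite P.

Definition gd (f : 'rV[R]_d -> R) := good (fun t => f (tup2rv t)).

Lemma gd_int f : gd f -> P.-integrable setT (EFin \o (fun t => f (tup2rv t))).
Proof. exact: good_integrable. Qed.

Lemma Ex_ext f g : (forall z, f z = g z) -> Ex P f = Ex P g.
Proof. by move=> fg; congr Ex; apply/funext. Qed.

Lemma Ex_D f g : gd f -> gd g -> Ex P (fun z => f z + g z) = Ex P f + Ex P g.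
Proof. by move=> hf hg; rewrite /Ex RintegralD //; exact: gd_int. Qed.

Lemma Ex_B f g : gd f -> gd g -> Ex P (fun z => f z - g z) = Ex P f - Ex P g.
Proof. by move=> hf hg; rewrite /Ex RintegralB //; exact: gd_int. Qed.

Lemma Ex_Zl a f : gd f -> Ex P (fun z => a * f z) = a * Ex P f.
Proof. by move=> hf; rewrite /Ex RintegralZl //; exact: gd_int. Qed.

Lemma Ex_cst a : Ex P (fun _ => a) = a.
Proof. rewrite /Ex Rintegral_cst //. have := probability_setT P. rewrite /= => ->. by rewrite mulr1. Qed.

Lemma gd_sum_seq (I : Type) (s : seq I) (F : I -> 'rV[R]_d -> R) :
  (forall i, gd (F i)) -> gd (fun z => \sum_(i <- s) F i z).
Proof. by move=> h; apply: good_sum_seq. Qed.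

Lemma Ex_sum (I : finType) (F : I -> 'rV[R]_d -> R) :
  (forall i, gd (F i)) -> Ex P (fun z => \sum_i F i z) = \sum_i Ex P (F i).
Proof.
move=> hF; elim: (index_enum I) => [|i s IH].
  by rewrite big_nil -(Ex_cst 0); apply: Ex_ext => z; rewrite big_nil Ex_cst.
rewrite big_cons -IH -Ex_D //; last exact: gd_sum_seq.
by apply: Ex_ext => z; rewrite big_cons.
Qed.

Lemma gd_add f g : gd f -> gd g -> gd (fun z => f z + g z).
Proof. exact: good_add. Qed.
Lemma gd_mul f g : gd f -> gd g -> gd (fun z => f z * g z).
Proof. exact: good_mul. Qed.
Lemma gd_cst a : gd (fun _ => a).
Proof. exact: good_cst. Qed.
Lemma gd_ext f g : gd f -> (forall z, f z = g z) -> gd g.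
Proof. by move=> hf fg; apply: good_ext hf _ => t; rewrite fg. Qed.
Lemma gd_sub f g : gd f -> gd g -> gd (fun z => f z - g z).
Proof.
move=> hf hg; apply: gd_ext (gd_add hf (gd_mul (gd_cst (-1)) hg)) _ => z.
by rewrite mulN1r.
Qed.
Lemma gd_sum (I : finType) (F : I -> 'rV[R]_d -> R) :
  (forall i, gd (F i)) -> gd (fun z => \sum_i F i z).
Proof. exact: gd_sum_seq. Qed.

Lemma main_gen n (H : 'rV[R]_d -> 'cV[R]_n) (Kt : 'rV[R]_d -> 'M[R]_(d,n))
  (G : 'M[R]_n) (c : R) :
  c != 0 -> G^T = G ->
  (forall (z : 'rV[R]_d) (l : 'I_n), \sum_(j < d) z 0 j * grad H z j l = c * H z l 0) ->
  (forall (z : 'rV[R]_d) (j : 'I_d) (k : 'I_n), Kt z j k = c^-1 * z 0 j * (H z k 0 - Emx P H k 0)) ->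
  (forall k, gd (fun z => H z k 0)) ->
  Emx P (fun z => (Kt z *m G)^T *m grad H z) = G *m covH P H.
Proof.
move=> c0 GT hE hK hH.
set Hb := Emx P H.
have hHb k : Hb k 0 = Ex P (fun z => H z k 0) by rewrite mxE.
apply/matrixP => k l; rewrite !mxE.
have pt z : ((Kt z *m G)^T *m grad H z) k l
    = \sum_i G k i * ((H z i 0 - Hb i 0) * H z l 0).
  rewrite trmx_mul GT -mulmxA mxE; apply: eq_bigr => i _; rewrite mxE; congr (_ * _).
  under eq_bigr do rewrite mxE hK.
  transitivity (c^-1 * (H z i 0 - Hb i 0) * \sum_j z 0 j * grad H z j l).
    by rewrite mulr_sumr; apply: eq_bigr => j _; ring.
  by rewrite hE; field.
have gi i : gd (fun z => (H z i 0 - Hb i 0) * H z l 0).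
  exact: gd_mul (gd_sub (hH i) (gd_cst _)) (hH l).
rewrite (Ex_ext pt) Ex_sum; last by move=> i; apply: gd_mul (gd_cst _) (gi i).
apply: eq_bigr => i _; rewrite Ex_Zl //; congr (_ * _).
rewrite /covH /= [RHS]mxE.
have -> : Ex P (fun z => ((H z - Hb) *m (H z - Hb)^T) i l) =
  Ex P (fun z => (H z i 0 - Hb i 0) * H z l 0 - Hb l 0 * (H z i 0 - Hb i 0)).
  by apply: Ex_ext => z; rewrite mxE big_ord1 !mxE; ring.
rewrite Ex_B //; last exact: gd_mul (gd_cst _) (gd_sub (hH i) (gd_cst _)).
rewrite Ex_Zl; last exact: gd_sub (hH i) (gd_cst _).
rewrite Ex_B //; [|exact: gd_cst].
by rewrite Ex_cst -hHb subrr mulr0 subr0.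
Qed.
End Ex.


Section D.
Variable R : realType.
Variable d : nat.

Lemma derive_cubic (f : 'rV[R]_d -> R) x v b c e :
  (forall h, f (h *: v + x) = f x + h*b + h^+2*c + h^+3*e) -> 'D_v f x = b.
Proof.
move=> hf; rewrite /derive.
apply: cvg_lim => //.
have -> : (fun h : R => h^-1 *: ((f \o shift x) (h *: v) - f x))
   = (fun h => h^-1 * (h * (b + h * (c + h * e)))).
  apply/funext => h /=; rewrite /shift /= hf; congr (_ * _); ring.
apply: (@cvg_trans _ ((fun h : R => b + h * (c + h * e)) @ 0^')).
  apply: near_eq_cvg; near=> h.
  rewrite mulrA mulVf ?mul1r //.
  near: h; exact: nbhs_dnbhs_neq.
have : (fun h : R => b + h * (c + h * e)) x @[x --> (0:R)] --> b + 0 * (c + 0 * e).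
  apply: cvgD; first exact: cvg_cst.
  apply: cvgM; first exact: cvg_id.
  apply: cvgD; first exact: cvg_cst.
  apply: cvgM; [exact: cvg_id|exact: cvg_cst].
rewrite mul0r addr0 => H.
exact: cvg_within_filter H.
Unshelve. all: by end_near.
Qed.

Definition bil (A : 'M[R]_d) (u w : 'rV[R]_d) : R := (u *m A *m w^T) 0 0.

Lemma bilDZl (A : 'M[R]_d) (a : R) (u w v : 'rV[R]_d) : bil A (a *: u + w) v = a * bil A u v + bil A w v.
Proof. by rewrite /bil !mulmxDl -!scalemxAl !mxE. Qed.

Lemma bilDZr (A : 'M[R]_d) (a : R) (u v w : 'rV[R]_d) : bil A u (a *: v + w) = a * bil A u v + bil A u w.
Proof. by rewrite /bil linearD linearZ /= mulmxDr -scalemxAr !mxE. Qed.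

Lemma quad_shift (A : 'M[R]_d) (h : R) (v x : 'rV[R]_d) : quad A (h *: v + x)
  = quad A x + h * (bil A v x + bil A x v) + h^+2 * quad A v.
Proof.
change (bil A (h*:v+x) (h*:v+x) = bil A x x + h * (bil A v x + bil A x v) + h^+2 * bil A v v).
rewrite bilDZl !bilDZr; ring.
Qed.

Lemma sum_lin (L : 'rV[R]_d -> R) (z : 'rV[R]_d) :
  (forall a u w, L (a *: u + w) = a * L u + L w) ->
  \sum_j z 0 j * L (delta_mx 0 j) = L z.
Proof.
move=> hL; have L0 : L 0 = 0.
  have := hL 1 0 0; rewrite scaler0 addr0 mul1r => h; lra.
rewrite {2}(row_sum_delta z).
elim: (index_enum 'I_d) => [|j s IH]; first by rewrite !big_nil.
by rewrite !big_cons hL IH.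
Qed.

Lemma grad_Hm (A : 'I_d -> 'M[R]_d) (z : 'rV[R]_d) (j l : 'I_d) : grad (Hm A) z j l
  = bil (A l) (delta_mx 0 j) z + bil (A l) z (delta_mx 0 j).
Proof.
rewrite mxE; apply: (@derive_cubic _ _ _ _ (quad (A l) (delta_mx 0 j)) 0) => h /=.
rewrite !mxE quad_shift; ring.
Qed.

Lemma euler_Hm (A : 'I_d -> 'M[R]_d) (z : 'rV[R]_d) (l : 'I_d) : \sum_(j < d) z 0 j * grad (Hm A) z j l = 2 * Hm A z l 0.
Proof.
under eq_bigr do rewrite grad_Hm.
rewrite (@sum_lin (fun u => bil (A l) u z + bil (A l) z u)).
  by rewrite mxE; change (bil (A l) z z + bil (A l) z z = 2 * bil (A l) z z); ring.
by move=> a u w; rewrite bilDZl bilDZr; ring.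
Qed.

Lemma coordZD (h : R) (v x : 'rV[R]_d) l : (h *: v + x) 0 l = h * v 0 l + x 0 l.
Proof. by rewrite !mxE. Qed.

Lemma Hv_idx (A : 'I_d -> 'M[R]_d) (x : 'rV[R]_d) (k l : 'I_d) : Hv A x (mxvec_index k l) 0
  = quad (A k) x * x 0 l + x 0 k * quad (A l) x.
Proof. by rewrite /Hv mxE mxvecE mxE. Qed.

Definition Dv (A : 'I_d -> 'M[R]_d) (z : 'rV[R]_d) (k l : 'I_d) (u : 'rV[R]_d) :=
  (bil (A k) u z + bil (A k) z u) * z 0 l + quad (A k) z * u 0 l
  + u 0 k * quad (A l) z + z 0 k * (bil (A l) u z + bil (A l) z u).

Lemma grad_Hv (A : 'I_d -> 'M[R]_d) (z : 'rV[R]_d) (j k l : 'I_d) : grad (Hv A) z j (mxvec_index k l) = Dv A z k l (delta_mx 0 j).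
Proof.
rewrite mxE; move: (delta_mx 0 j) => v; apply: (@derive_cubic _ _ _ _
  (quad (A k) v * z 0 l + (bil (A k) v z + bil (A k) z v) * v 0 l
   + v 0 k * (bil (A l) v z + bil (A l) z v) + z 0 k * quad (A l) v)
  (quad (A k) v * v 0 l + v 0 k * quad (A l) v)) => h /=.
rewrite !Hv_idx !quad_shift !coordZD /Dv; ring.
Qed.

Lemma euler_Hv (A : 'I_d -> 'M[R]_d) (z : 'rV[R]_d) (i : 'I_(d * d)) : \sum_(j < d) z 0 j * grad (Hv A) z j i = 3 * Hv A z i 0.
Proof.
case/mxvec_indexP: i => k l.
under eq_bigr do rewrite grad_Hv.
rewrite (@sum_lin (Dv A z k l)).
  rewrite Hv_idx /Dv.
  change (((bil (A k) z z + bil (A k) z z) * z 0 l + bil (A k) z z * z 0 l +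
    z 0 k * bil (A l) z z + z 0 k * (bil (A l) z z + bil (A l) z z)) =
    3 * (bil (A k) z z * z 0 l + z 0 k * bil (A l) z z)); ring.
by move=> a u w; rewrite /Dv !bilDZl !bilDZr !mxE; ring.
Qed.
End D.


Section F.
Variable R : realType.
Variable d : nat.
Variable P : probability (d.-tuple R) R.
Hypothesis hmom : all_moments_finite P.

Lemma gd_coord j : gd (fun z : 'rV[R]_d => z 0 j).
Proof. by apply: good_ext (good_coord hmom j) _ => t; rewrite mxE. Qed.

Lemma gd_quad (A : 'M[R]_d) : gd (quad A).
Proof.
apply: (@gd_ext _ _ (fun z => \sum_b (\sum_a z 0 a * A a b) * z 0 b)).
  apply: gd_sum => b; apply: gd_mul; last exact: gd_coord.
  by apply: gd_sum => a; apply: gd_mul; [exact: gd_coord | exact: gd_cst].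
move=> z; rewrite /quad mxE; apply: eq_bigr => b _; rewrite !mxE.
by congr (_ * _); apply: eq_bigr => a _; rewrite mxE.
Qed.

Lemma gd_Hm (A : 'I_d -> 'M[R]_d) k : gd (fun z => Hm A z k 0).
Proof. by apply: gd_ext (gd_quad (A k)) _ => z; rewrite mxE. Qed.

Lemma gd_Hv (A : 'I_d -> 'M[R]_d) i : gd (fun z => Hv A z i 0).
Proof.
case/mxvec_indexP: i => k l.
apply: gd_ext (gd_add (gd_mul (gd_quad (A k)) (gd_coord l)) (gd_mul (gd_coord k) (gd_quad (A l)))) _.
by move=> z; rewrite Hv_idx.
Qed.
End F.

Lemma invsym (R : realType) n (G : 'M[R]_n) : G^T = G ->
  (invmx G *m invmx G)^T = invmx G *m invmx G.
Proof. by move=> h; rewrite trmx_mul trmx_inv h. Qed.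

Unset Implicit Arguments. Set Strict Implicit.

Theorem proposition5p1 (R : realType) (d : nat)
  (A : 'I_d -> 'M[R]_d) (hA : forall k, (A k)^T = A k)
  (P : probability (d.-tuple R) R) (rho : d.-tuple R -> R)
  (hrho : is_density P rho) (hmom : all_moments_finite P)
  (Gm : 'M[R]_d) (Gv : 'M[R]_(d * d)) (hGm : spd Gm) (hGv : spd Gv) :
  let Km := fun z => Ktm P A z *m (invmx Gm *m invmx Gm) in
  let Kv := fun z => Ktv P A z *m (invmx Gv *m invmx Gv) in
  Emx P (fun z => (Km z)^T *m grad (Hm A) z)
    = (invmx Gm *m invmx Gm) *m covH P (Hm A)
  /\
  Emx P (fun z => (Kv z)^T *m grad (Hv A) z)
    = (invmx Gv *m invmx Gv) *m covH P (Hv A).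
Proof.
move=> Km Kv; split.
- rewrite /Km; apply: (@main_gen _ _ _ hmom _ _ _ _ 2).
  + by rewrite pnatr_eq0.
  + exact: invsym hGm.1.
  + by move=> z l; rewrite euler_Hm.
  + by move=> z j k; rewrite /Ktm /= !mxE.
  + exact: gd_Hm.
- rewrite /Kv; apply: (@main_gen _ _ _ hmom _ _ _ _ 3).
  + by rewrite pnatr_eq0.
  + exact: invsym hGv.1.
  + by move=> z l; rewrite euler_Hv.
  + move=> z j i; case/mxvec_indexP: i => k l.
    rewrite /Ktv /= !mxE mxvecE !mxE mxvecE mxE; ring.
  + exact: gd_Hv.
Qed.
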